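(* Let $d\ge1$ and let $P$ be a permutation array of rank $2$ and dimension $d$. Let $\Gamma$ be the star metric graph with central vertex $v$ and edges $e_1,\dots,e_d$ of common length $\ell>0$. For $\mathbf x\in[2]^d$, let $f_{\mathbf x}$ be the function on $\Gamma$ with $f_{\mathbf x}(v)=0$ and constant slope $x_i$ along $e_i$ directed away from $v$. Let $s$ be an integer with $s\ge\sum_ix_i$ for all $\mathbf x\in P$, and let $\Sigma=\langle f_{\mathbf x}:\mathbf x\in P\rangle\subseteq R(s\cdot v)$. Then for every effective divisor $E=v_1+v_2$ of degree $2$ on $\Gamma$ there exists $f\in\Sigma$ with $\mathrm{div}(f)+s\cdot v\ge E$.
   Context: $\mathrm{sl}_\eta(f)$ denotes the outgoing slope. We set $\mathrm{div}(f)=\sum_p(-\sum_{\eta\in T_p}\mathrm{sl}_\eta(f))p$ and $R(D)=\{f:D+\mathrm{div}(f)\ge0\}$. $\langle f_1,\dots,f_n\rangle$ denotes the set of all $\min\{f_1+a_1,\dots,f_n+a_n\}$ with $a_i\in\mathbb R$. $[2]=\{0,1,2\}$, and $[2]^d$ is ordered coordinatewise with meet the coordinatewise minimum. $P\subseteq[r]^d$ is rankable of rank $t$ if each coordinate takes exactly $t+1$ distinct values on $P$. It is totally rankable if each principal subarray $\{\mathbf y\in P:\mathbf y\succeq\mathbf x\}$ is rankable. A redundant point is the coordinatewise minimum of $\ge2$ elements of $P$, each sharing a coordinate with it. A permutation array of rank $r$ and dimension $d$ is a totally rankable $P\subseteq[r]^d$ of rank $r$ with no redundant points. *)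

(* Defs.v *)
From HB Require Import structures.
From mathcomp Require Import all_boot all_order all_algebra.
From mathcomp Require Import reals.
Set Implicit Arguments. Unset Strict Implicit. Unset Printing Implicit Defensive.
Import Order.TTheory GRing.Theory Num.Theory.
Local Open Scope ring_scope.

(* A point of [r]^d = {0,...,r}^d. *)
Notation pt r d := {ffun 'I_d -> 'I_r.+1}.

Definition cle r d (x y : pt r d) : bool := [forall i, (x i <= y i)%N].

Definition ncoordvals r d (Q : {set pt r d}) (i : 'I_d) : nat :=
  #|[set x i | x : pt r d in Q]|.

Definition rankable_of_rank r d (Q : {set pt r d}) (t : nat) : Prop :=
  forall i, ncoordvals Q i = t.+1.

(* rankable (of some rank; the empty array counts as rankable, of rank -1) *)
Definition rankable r d (Q : {set pt r d}) : Prop :=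
  exists n : nat, forall i, ncoordvals Q i = n.

Definition principal r d (P : {set pt r d}) (x : pt r d) : {set pt r d} :=
  [set y in P | cle x y].

Definition totally_rankable r d (P : {set pt r d}) : Prop :=
  forall x : pt r d, rankable (principal P x).

Definition is_meet r d (S : {set pt r d}) (y : pt r d) : Prop :=
  forall i, (forall z, z \in S -> (y i <= z i)%N) /\ (exists2 z, z \in S & z i = y i).

Definition shares_coord r d (z y : pt r d) : Prop := exists i, z i = y i.

Definition redundant r d (P : {set pt r d}) (y : pt r d) : Prop :=
  exists S : {set pt r d},
    [/\ S \subset P :\ y, (2 <= #|S|)%N, is_meet S y &
        forall z, z \in S -> shares_coord z y].

Definition permutation_array (r d : nat) (P : {set pt r d}) : Prop :=
  [/\ totally_rankable P, rankable_of_rank P r &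
      forall y, y \in P -> ~ redundant P y].

(* A point of the star graph Gamma with edges e_0..e_{d-1} of length l:
   [None] is the central vertex v, [Some (i, t)] (with 0 < t <= l) is the point
   of e_i at distance t from v. *)
Definition spt (R : realType) (d : nat) := option ('I_d * R).

Definition valid_pt (R : realType) d (l : R) (p : spt R d) : bool :=
  if p is Some (_, t) then (0 < t) && (t <= l) else true.

(* Tangent directions: (i, true) = along e_i away from v; (i, false) = along e_i
   towards v.  [tangent l p eta] says eta is a tangent direction at p. *)
Definition tangent (R : realType) d (l : R) (p : spt R d) (eta : 'I_d * bool) : bool :=
  match p with
  | None => eta.2
  | Some (i, t) => (eta.1 == i) && (if eta.2 then t < l else true)
  end.

Definition move (R : realType) d (p : spt R d) (eta : 'I_d * bool) (h : R) : spt R d :=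
  match p with
  | None => Some (eta.1, h)
  | Some (i, t) => if eta.2 then Some (i, t + h)
                   else if h < t then Some (i, t - h) else None
  end.

Definition has_slope (R : realType) d (f : spt R d -> R) (p : spt R d)
    (eta : 'I_d * bool) (sigma : R) : Prop :=
  exists2 delta : R, 0 < delta &
    forall h, 0 < h -> h < delta -> f (move p eta h) = f p + sigma * h.

(* div(f) + D >= E, for divisors D, E given by their coefficient functions:
   at every point p, -(sum of outgoing slopes) + D(p) >= E(p). *)
Definition div_plus_ge (R : realType) d (l : R) (f : spt R d -> R)
    (D E : spt R d -> R) : Prop :=
  forall p, valid_pt l p ->
    exists sl : 'I_d * bool -> R,
      (forall eta, tangent l p eta -> has_slope f p eta (sl eta)) /\
      E p <= - (\sum_(eta | tangent l p eta) sl eta) + D p.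

Definition sv (R : realType) d (s : int) (p : spt R d) : R :=
  if p is None then s%:~R else 0.

Definition div2 (R : realType) d (v1 v2 : spt R d) (p : spt R d) : R :=
  (p == v1)%:R + (p == v2)%:R.

Definition fx (R : realType) d (x : pt 2 d) (p : spt R d) : R :=
  if p is Some (i, t) then (x i)%:R * t else 0.

(* f belongs to Sigma = < f_x : x in P >, i.e. f = min_{x in P} (f_x + a_x)
   on Gamma for some real constants a_x *)
Definition in_Sigma (R : realType) d (l : R) (P : {set pt 2 d}) (f : spt R d -> R) : Prop :=
  exists a : pt 2 d -> R, forall p, valid_pt l p ->
    (forall x, x \in P -> f p <= fx x p + a x) /\
    (exists2 x, x \in P & f p = fx x p + a x).

(* Main.v *)
Require Import Defs.
From HB Require Import structures.
From mathcomp Require Import all_boot all_order all_algebra.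
From mathcomp Require Import reals.
From mathcomp Require Import lra.
From Stdlib Require Classical_Prop.
Import Order.TTheory GRing.Theory Num.Theory.
Set Implicit Arguments. Unset Strict Implicit. Unset Printing Implicit Defensive.

Lemma surj d (P : {set pt 2 d}) : rankable_of_rank P 2 ->
  forall k (b : 'I_3), exists2 x, x \in P & x k = b.
Proof.
move=> H k b.
have E : [set x k | x : pt 2 d in P] = setT.
  apply/eqP; rewrite eqEcard subsetT cardsT card_ord.
  by have := H k; rewrite /ncoordvals => ->.
have : b \in [set x k | x : pt 2 d in P] by rewrite E inE.
by case/imsetP => x xP ->; exists x.
Qed.

Definition pk d (i : 'I_d) (b : 'I_3) : pt 2 d := [ffun m => if m == i then b else ord0].

Lemma cle_pk d i b (y : pt 2 d) : cle (pk i b) y = (b <= y i)%N.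
Proof.
apply/forallP/idP => [H | H m]; first by have := H i; rewrite ffunE eqxx.
by rewrite ffunE; case: eqP => [->|_].
Qed.

Lemma F1 d (P : {set pt 2 d}) : totally_rankable P -> rankable_of_rank P 2 ->
  forall i j x y, x \in P -> y \in P -> (x i : nat) = 2 -> (y i : nat) = 2 -> x j = y j.
Proof.
move=> tr rk i j x y xP yP xi yi.
have [n hn] := tr (pk i (inord 2)).
set Q := principal P (pk i (inord 2)) in hn.
have inQ : forall z, (z \in Q) = (z \in P) && (2 <= z i)%N.
  by move=> z; rewrite inE cle_pk inordK.
have xQ : x \in Q by rewrite inQ xP xi.
have yQ : y \in Q by rewrite inQ yP yi.
have c1 : ncoordvals Q i = 1.
  apply/eqP; rewrite eqn_leq; apply/andP; split.
  - apply/card_le1_eqP => a1 a2 /imsetP[z1 z1Q ->] /imsetP[z2 z2Q ->].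
    move: z1Q z2Q; rewrite !inQ => /andP[_ h1] /andP[_ h2].
    apply: val_inj => /=.
    have l1 := ltn_ord (z1 i); have l2 := ltn_ord (z2 i).
    case E1 : (z1 i : nat) h1 l1 => [|[|[|k]]] // _ _.
    by case E2 : (z2 i : nat) h2 l2 => [|[|[|k]]].
  - by apply/card_gt0P; exists (x i); apply/imsetP; exists x.
have : (ncoordvals Q j <= 1)%N by rewrite hn -(hn i) c1.
move/card_le1_eqP => H.
have hx : x j \in [set z j | z : pt 2 d in Q] by apply/imsetP; exists x.
have hy : y j \in [set z j | z : pt 2 d in Q] by apply/imsetP; exists y.
exact: H _ _ hy hx.
Qed.

Lemma F2 d (P : {set pt 2 d}) : totally_rankable P -> rankable_of_rank P 2 ->
  forall i j,
  (exists x y, [/\ x \in P, y \in P, (1 <= x i)%N, (1 <= y i)%N & x j != y j]) /\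
  (forall x y z, x \in P -> y \in P -> z \in P -> (1 <= x i)%N -> (1 <= y i)%N -> (1 <= z i)%N ->
     x j != y j -> y j != z j -> z j != x j -> False).
Proof.
move=> tr rk i j.
have [n hn] := tr (pk i (inord 1)).
set Q := principal P (pk i (inord 1)) in hn.
have inQ : forall z, (z \in Q) = (z \in P) && (1 <= z i)%N.
  by move=> z; rewrite inE cle_pk inordK.
have [x1 x1P x1i] := surj rk i (inord 1).
have [x2 x2P x2i] := surj rk i (inord 2).
have c2 : ncoordvals Q i = 2.
  apply/eqP; rewrite eqn_leq; apply/andP; split.
  - rewrite /ncoordvals.
    apply: leq_trans (subset_leq_card (_ : _ \subset [set (inord 1 : 'I_3); inord 2])) _.
      apply/subsetP => a /imsetP[z zQ ->]; move: zQ; rewrite inQ => /andP[_ h1].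
      rewrite !inE; have l1 := ltn_ord (z i).
      case E : (z i : nat) h1 l1 => [|[|[|k]]] // _ _.
        by rewrite /eq_op /= inordK // E.
      by rewrite orbC /eq_op /= inordK // E.
    by rewrite cards2 ltnS leq_b1.
  - apply/card_gt1P; exists (x1 i), (x2 i); split.
    + by apply/imsetP; exists x1; rewrite // inQ x1P x1i inordK.
    + by apply/imsetP; exists x2; rewrite // inQ x2P x2i inordK.
    + by rewrite x1i x2i /eq_op /= !inordK.
have cj : ncoordvals Q j = 2 by rewrite hn -(hn i) c2.
split.
  have : (1 < ncoordvals Q j)%N by rewrite cj.
  case/card_gt1P => a [b [/imsetP[x xQ ->] /imsetP[y yQ ->] ne]].
  move: xQ yQ; rewrite !inQ => /andP[xP xi] /andP[yP yi].
  by exists x, y.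
move=> x y z xP yP zP xi yi zi nxy nyz nzx.
have : (2 < ncoordvals Q j)%N.
  apply/card_gt2P; exists (x j), (y j), (z j); split; split => //.
  + by apply/imsetP; exists x; rewrite // inQ xP.
  + by apply/imsetP; exists y; rewrite // inQ yP.
  + by apply/imsetP; exists z; rewrite // inQ zP.
by rewrite cj.
Qed.

Local Open Scope ring_scope.

Definition gval (R : realType) d (a : pt 2 d -> R) (x : pt 2 d) (p : spt R d) : R :=
  fx x p + a x.

Definition amin (R : realType) d (P : {set pt 2 d}) (x0 : pt 2 d) (a : pt 2 d -> R)
  (p : spt R d) : pt 2 d :=
  Order.arg_min x0 (fun x => x \in P) (fun x => gval a x p).

Definition fmin (R : realType) d (P : {set pt 2 d}) (x0 : pt 2 d) (a : pt 2 d -> R)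
  (p : spt R d) : R := gval a (amin P x0 a p) p.

Lemma amin_in (R : realType) d (P : {set pt 2 d}) x0 (a : pt 2 d -> R) p :
  x0 \in P -> amin P x0 a p \in P.
Proof. by move=> h; rewrite /amin; case: arg_minP. Qed.

Lemma fmin_le (R : realType) d (P : {set pt 2 d}) x0 (a : pt 2 d -> R) p x :
  x0 \in P -> x \in P -> fmin P x0 a p <= gval a x p.
Proof. by move=> h hx; rewrite /fmin /amin; case: arg_minP => // y _; apply. Qed.

Definition act (R : realType) d (P : {set pt 2 d}) x0 (a : pt 2 d -> R) p :=
  [set x in P | gval a x p == fmin P x0 a p].

Definition dsl (R : realType) d (x : pt 2 d) (p : spt R d) (eta : 'I_d * bool) : R :=
  match p with
  | None => (x eta.1)%:R
  | Some (i, _) => if eta.2 then (x i)%:R else - (x i)%:R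
  end.

Definition xsl (R : realType) d (P : {set pt 2 d}) x0 (a : pt 2 d -> R) p eta :=
  Order.arg_min (amin P x0 a p) (fun x => x \in act P x0 a p) (fun x => dsl x p eta).

Definition sl (R : realType) d (P : {set pt 2 d}) x0 (a : pt 2 d -> R) p eta :=
  dsl (xsl P x0 a p eta) p eta.

Lemma amin_act (R : realType) d (P : {set pt 2 d}) x0 (a : pt 2 d -> R) p :
  x0 \in P -> amin P x0 a p \in act P x0 a p.
Proof. by move=> h; rewrite inE amin_in //= /fmin eqxx. Qed.

Lemma xsl_act (R : realType) d (P : {set pt 2 d}) x0 (a : pt 2 d -> R) p eta :
  x0 \in P -> xsl P x0 a p eta \in act P x0 a p.
Proof. by move=> h; rewrite /xsl; case: arg_minP => //; apply: amin_act. Qed.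

Lemma sl_le (R : realType) d (P : {set pt 2 d}) x0 (a : pt 2 d -> R) p eta y :
  x0 \in P -> y \in act P x0 a p -> sl P x0 a p eta <= dsl y p eta.
Proof.
move=> h hy; rewrite /sl /xsl; case: arg_minP => //; first exact: amin_act.
by move=> z _; apply.
Qed.


Lemma natR_le2 (R : realType) d (x : pt 2 d) k : ((x k)%:R : R) <= 2.
Proof. by rewrite ler_nat; have := ltn_ord (x k). Qed.

Lemma dsl_bnd (R : realType) d (x : pt 2 d) (p : spt R d) eta :
  -2 <= dsl x p eta <= 2.
Proof.
have h0 k : (0 : R) <= (x k)%:R by rewrite ler0n.
rewrite /dsl; case: p => [[i t]|]; last by have := natR_le2 R x eta.1; have := h0 eta.1; move=> *; apply/andP; split; lra.
have := natR_le2 R x i; have := h0 i; case: eta.2 => *; apply/andP; split; lra.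
Qed.


Lemma fx_move (R : realType) d (l : R) (x : pt 2 d) (p : spt R d) eta h :
  tangent l p eta -> 0 < h -> (if p is Some (_, t) then h < t else true) ->
  fx x (move p eta h) = fx x p + dsl x p eta * h.
Proof.
case: p => [[i t]|] /= _ h0 ht; last by rewrite add0r.
case: eta.2; last rewrite ht; rewrite /fx /dsl /=; lra.
Qed.

Definition gp (R : realType) d (P : {set pt 2 d}) x0 (a : pt 2 d -> R) (p : spt R d) : R :=
  \big[Order.min/1]_(x | (x \in P) && (gval a x p != fmin P x0 a p)) (gval a x p - fmin P x0 a p).

Lemma gp_pos (R : realType) d (P : {set pt 2 d}) x0 (a : pt 2 d -> R) p :
  x0 \in P -> 0 < gp P x0 a p.
Proof.
move=> h0; apply/bigmin_gtP; split=> // x /andP[xP ne].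
rewrite subr_gt0 lt_neqAle eq_sym ne /=; exact: fmin_le.
Qed.

Lemma gp_le (R : realType) d (P : {set pt 2 d}) x0 (a : pt 2 d -> R) p x :
  x \in P -> x \notin act P x0 a p -> gp P x0 a p <= gval a x p - fmin P x0 a p.
Proof.
move=> xP; rewrite inE xP /= => ne; apply: bigmin_le_cond; by rewrite xP.
Qed.

Definition tb (R : realType) d (p : spt R d) : R := if p is Some (_, t) then t else 1.

Lemma slope_ok (R : realType) d (l : R) (P : {set pt 2 d}) x0 (a : pt 2 d -> R) p eta :
  x0 \in P -> valid_pt l p -> tangent l p eta ->
  has_slope (fmin P x0 a) p eta (sl P x0 a p eta).
Proof.
move=> h0 vp tp.
have tb0 : 0 < tb p by case: p vp {tp} => [[i t]|] //= /andP[].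
have g0 := gp_pos a p h0.
exists (Order.min (tb p) (gp P x0 a p / 4)).
  by rewrite lt_min tb0 /=; lra.
move=> h hpos; rewrite lt_min => /andP[htb hgp].
have mv : forall x, gval a x (move p eta h) = gval a x p + dsl x p eta * h.
  move=> x; rewrite /gval (fx_move x tp hpos); first lra.
  by move: htb; rewrite /tb; case: (p) => [[i t]|].
set m := fmin P x0 a p.
have hs := xsl_act a p eta h0.
have hsP : xsl P x0 a p eta \in P by move: hs; rewrite inE => /andP[].
apply/eqP; rewrite eq_le; apply/andP; split.
  apply: le_trans (fmin_le _ _ h0 hsP) _.
  rewrite mv; move: hs; rewrite inE => /andP[_ /eqP ->]; done.
rewrite /fmin -/(fmin P x0 a (move p eta h)).
set y := amin P x0 a (move p eta h).
have yP : y \in P := amin_in a _ h0.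
have -> : fmin P x0 a (move p eta h) = gval a y (move p eta h) by [].
rewrite mv.
case: (boolP (y \in act P x0 a p)) => ya.
  have := sl_le eta h0 ya; move: ya; rewrite inE => /andP[_ /eqP ->] le1.
  rewrite lerD2l; by rewrite ler_pM2r.
have := gp_le yP ya; rewrite -/m => hg.
have /andP[b1 _] := dsl_bnd y p eta.
have /andP[_ b2] := dsl_bnd (xsl P x0 a p eta) p eta.
rewrite /sl in b2 *.
set u := dsl (xsl P x0 a p eta) p eta in b2 *.
set w := dsl y p eta in b1 *.
nra.
Qed.


Lemma sum_none (R : realType) d (l : R) (F : 'I_d * bool -> R) :
  \sum_(eta | tangent l None eta) F eta = \sum_k F (k, true).
Proof.
rewrite (eq_bigr (fun eta => F (eta.1, eta.2))); last by case.
rewrite (eq_bigl (fun eta : 'I_d * bool => xpredT eta.1 && (fun b : bool => b) eta.2)) //.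
rewrite -(pair_big xpredT (fun b : bool => b) (fun k b => F (k, b))) /=.
by apply: eq_bigr => k _; rewrite big_mkcond big_bool /= addr0.
Qed.

Lemma sum_some (R : realType) d (l : R) i t (F : 'I_d * bool -> R) :
  \sum_(eta | tangent l (Some (i, t)) eta) F eta =
  (if t < l then F (i, true) else 0) + F (i, false).
Proof.
rewrite (eq_bigr (fun eta => F (eta.1, eta.2))); last by case.
rewrite (eq_bigl (fun eta : 'I_d * bool => (fun k => k == i) eta.1 &&
   (fun b : bool => if b then t < l else true) eta.2)) //.
rewrite -(pair_big (fun k => k == i) (fun b : bool => if b then t < l else true)
   (fun k b => F (k, b))) /=.
by rewrite big_pred1_eq big_mkcond big_bool /=; case: (t < l).
Qed.


Lemma natz_le (R:realType) (n:nat) (s:int) : (n%:Z <= s)%R -> (n%:R : R) <= s%:~R.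
Proof. by move=> h; rewrite pmulrn ler_int. Qed.

Lemma D_none (R : realType) d (l : R) (P : {set pt 2 d}) x0 (a : pt 2 d -> R) (s : int) (E : R)
  (c : 'I_d -> pt 2 d) :
  x0 \in P -> (forall k, c k \in act P x0 a None) ->
  E + (\sum_k (c k k : nat))%:R <= s%:~R ->
  E <= - (\sum_(eta | tangent l None eta) sl P x0 a None eta) + sv s (None : spt R d).
Proof.
move=> h0 hc hE; rewrite sum_none /sv.
have : \sum_k sl P x0 a None (k, true) <= \sum_k ((c k k : nat)%:R : R).
  by apply: ler_sum => k _; exact: (sl_le (k, true) h0 (hc k)).
rewrite natr_sum in hE; lra.
Qed.

Lemma D_some (R : realType) d (l : R) (P : {set pt 2 d}) x0 (a : pt 2 d -> R) (s : int) (E : R)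
  i t y z :
  x0 \in P -> y \in act P x0 a (Some (i, t)) -> z \in act P x0 a (Some (i, t)) ->
  E <= (z i : nat)%:R - (y i : nat)%:R ->
  E <= - (\sum_(eta | tangent l (Some (i, t)) eta) sl P x0 a (Some (i, t)) eta) + sv s (Some (i, t)).
Proof.
move=> h0 hy hz hE; rewrite sum_some /sv.
have h1 := sl_le (i, true) h0 hy; have h2 := sl_le (i, false) h0 hz.
rewrite /sl /dsl /= in h1 h2 *.
have y0 : (0 : R) <= (y i : nat)%:R by rewrite ler0n.
case: (t < l); lra.
Qed.



Lemma two_others (l3 : 'I_3) : exists b1 b2 : 'I_3, [/\ b1 != b2, b1 != l3 & b2 != l3].
Proof.
case: l3 => [[|[|[|//]]] H].
- by exists (inord 1), (inord 2); rewrite /eq_op /= !inordK.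
- by exists (inord 0), (inord 2); rewrite /eq_op /= !inordK.
- by exists (inord 0), (inord 1); rewrite /eq_op /= !inordK.
Qed.

Lemma comb2 (R : realType) d (P : {set pt 2 d}) (i j : 'I_d) (h : pt 2 d -> R) :
  (forall b, exists2 x, x \in P & x i = b) ->
  (forall b, exists2 x, x \in P & x j = b) ->
  (forall x y, x \in P -> y \in P -> (x i : nat) = 2%N -> (y i : nat) = 2%N -> x j = y j) ->
  (exists x y, [/\ x \in P, y \in P, (1 <= x i)%N, (1 <= y i)%N & x j != y j]) ->
  (forall x y z, x \in P -> y \in P -> z \in P -> (1 <= x i)%N -> (1 <= y i)%N -> (1 <= z i)%N ->
     x j != y j -> y j != z j -> z j != x j -> False) ->
  exists c : R,
    (exists x y, [/\ x \in P, y \in P, (x i < y i)%N, h x <= c & h y <= c]) /\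
    (exists z w, [/\ z \in P, w \in P, (z j < w j)%N, c <= h z & c <= h w]).
Proof.
move=> si sj F1 F2a F2b.
have [xa xaP xai] := si (inord 0).
have [xb xbP xbi] := si (inord 1).
pose pr := fun q : pt 2 d * pt 2 d => [&& q.1 \in P, q.2 \in P & q.1 i != q.2 i].
pose F := fun q : pt 2 d * pt 2 d => Order.max (h q.1) (h q.2).
have pr0 : pr (xa, xb) by rewrite /pr /= xaP xbP /= xai xbi /eq_op /= !inordK.
case: (arg_minP F pr0) => [[q1 q2]] /and3P[/= q1P q2P qne] qmin.
set sg := F (q1, q2).
exists sg; split.
  rewrite /sg /F /=.
  case: (ltngtP (q1 i) (q2 i)) => hq.
  - by exists q1, q2; split=> //; rewrite le_max lexx ?orbT.
  - by exists q2, q1; split=> //; rewrite le_max lexx ?orbT.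
  - by move: qne; rewrite (val_inj hq) eqxx.
case: (Classical_Prop.classic (exists z w, [/\ z \in P, w \in P, (z j < w j)%N, sg <= h z & sg <= h w])) => // hn.
exfalso.
have heq : forall z w, z \in P -> w \in P -> sg <= h z -> sg <= h w -> z j = w j.
  move=> z w zP wP hz hw; apply: val_inj; case: (ltngtP (z j) (w j)) => // hzw; exfalso; apply: hn.
  - by exists z, w.
  - by exists w, z.
have leq_low : forall x y, x \in P -> y \in P -> h x < sg -> h y < sg -> x i = y i.
  move=> x y xP yP hx hy; apply/eqP; apply: contraLR isT => ne.
  have H := qmin (x, y); rewrite /pr /= xP yP ne in H; have H2 := H isT.
  have : F (x, y) < sg by rewrite /F /= gt_max hx hy.
  by rewrite ltNge H2.
pose n := if h q1 <= h q2 then q2 else q1.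
have nP : n \in P by rewrite /n; case: ifP.
have nh : sg <= h n by rewrite /n /sg /F /=; case: ifP => H; rewrite ge_max lexx ?H //; rewrite leNgt; apply/negP => H'; move: H; rewrite ltW.
have hi : forall z, z \in P -> sg <= h z -> z j = n j by move=> z zP hz; exact: heq.
have [z0 z0P z0j] := sj (inord 0).
have [z1 z1P z1j] := sj (inord 1).
have [m [mP ml]] : exists m, m \in P /\ h m < sg.
  case: (boolP (h z0 < sg)) => [H|]; first by exists z0.
  rewrite -leNgt => H0; case: (boolP (h z1 < sg)) => [H|]; first by exists z1.
  rewrite -leNgt => H1; have := heq _ _ z0P z1P H0 H1.
  by rewrite z0j z1j => /(congr1 val) /=; rewrite !inordK.
have lo : forall x, x \in P -> h x < sg -> x i = m i by move=> x xP hx; exact: leq_low.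
have split_ : forall x, x \in P -> x i = m i \/ x j = n j.
  move=> x xP; case: (boolP (h x < sg)) => H; first by left; exact: lo.
  by right; apply: hi => //; rewrite leNgt.
have [b1 [b2 [b12 b1n b2n]]] := two_others (n j).
have [u uP uj] := sj b1.
have [w wP wj] := sj b2.
have ui : u i = m i by case: (split_ u uP) => // H; move: b1n; rewrite -uj H eqxx.
have wi : w i = m i by case: (split_ w wP) => // H; move: b2n; rewrite -wj H eqxx.
have mi3 : (m i < 3)%N := ltn_ord (m i).
case Em : (m i : nat) => [|[|[|k]]]; last by rewrite Em in mi3.
-
  have [x [y [xP yP xi yi xy]]] := F2a.
  have hx : x j = n j.
    case: (split_ x xP) => // H; by move: xi; rewrite H Em.
  have hy : y j = n j.
    case: (split_ y yP) => // H; by move: yi; rewrite H Em.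
  by move: xy; rewrite hx hy eqxx.
-
  have [e eP ei] := si (inord 2).
  have ej : e j = n j.
    case: (split_ e eP) => // H; move: H; rewrite ei => /(congr1 val) /=.
    by rewrite inordK // Em.
  apply: (F2b u w e uP wP eP).
  + by rewrite ui Em.
  + by rewrite wi Em.
  + by rewrite ei inordK.
  + by rewrite uj wj.
  + by rewrite wj ej.
  + by rewrite ej uj eq_sym.
-
  have := F1 u w uP wP; rewrite ui wi Em => /(_ erefl erefl).
  by rewrite uj wj => H; move: b12; rewrite H eqxx.
Qed.


Definition acoef (R : realType) d (v1 v2 : spt R d) (c : R) (x : pt 2 d) : R :=
  - Num.min (fx x v1) (fx x v2 + c).

Lemma act_v1 (R : realType) d (P : {set pt 2 d}) x0 (v1 v2 : spt R d) c x :
  x0 \in P -> x \in P -> fx x v1 - fx x v2 <= c -> x \in act P x0 (acoef v1 v2 c) v1.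
Proof.
move=> h0 xP hx; rewrite inE xP andTb.
have g0 : forall y, 0 <= gval (acoef v1 v2 c) y v1.
  move=> y; rewrite /gval /acoef minEle; case: ifP => H; [lra|move/negbT: H; rewrite -ltNge => H; lra].
have gx : gval (acoef v1 v2 c) x v1 = 0.
  rewrite /gval /acoef minEle; case: ifP => H; first lra.
  move/negbT: H; rewrite -ltNge => H; lra.
have := fmin_le (acoef v1 v2 c) v1 h0 xP; rewrite gx => H1.
have := g0 (amin P x0 (acoef v1 v2 c) v1); rewrite -/(fmin _ _ _ _) => H2.
by apply/eqP; apply: le_anti; rewrite H1 H2.
Qed.

Lemma act_v2 (R : realType) d (P : {set pt 2 d}) x0 (v1 v2 : spt R d) c x :
  x0 \in P -> x \in P -> c <= fx x v1 - fx x v2 -> x \in act P x0 (acoef v1 v2 c) v2.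
Proof.
move=> h0 xP hx; rewrite inE xP andTb.
have g0 : forall y, - c <= gval (acoef v1 v2 c) y v2.
  move=> y; rewrite /gval /acoef minEle; case: ifP => H; [lra|move/negbT: H; rewrite -ltNge => H; lra].
have gx : gval (acoef v1 v2 c) x v2 = - c.
  rewrite /gval /acoef minEle; case: ifP => H; [lra|move/negbT: H; rewrite -ltNge => H; lra].
have := fmin_le (acoef v1 v2 c) v2 h0 xP; rewrite gx => H1.
have := g0 (amin P x0 (acoef v1 v2 c) v2); rewrite -/(fmin _ _ _ _) => H2.
by apply/eqP; apply: le_anti; rewrite H1 H2.
Qed.

Lemma D_gen (R : realType) d (l : R) (P : {set pt 2 d}) x0 (a : pt 2 d -> R) (s : int) p (E : R) :
  x0 \in P -> valid_pt l p ->
  (forall y, y \in P -> ((\sum_(i < d) (y i : nat))%:Z <= s)%R) ->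
  (E <= 0 \/
   (E <= 1 /\ exists k y z, [/\ y \in act P x0 a p, z \in act P x0 a p, (y k < z k)%N &
        (if p is Some (i, _) then k = i else True)]) \/
   (E <= 2 /\ (2 <= s)%R /\ forall k (b : 'I_3), exists2 y, y \in act P x0 a p & y k = b)) ->
  E <= - (\sum_(eta | tangent l p eta) sl P x0 a p eta) + sv s p.
Proof.
move=> h0 vp hs [E0|[[E1 [k [y [z [ya za yz hk]]]]]|[E2 [s2 hall]]]].
- have am := amin_act a p h0.
  have amP : amin P x0 a p \in P by move: am; rewrite inE => /andP[].
  case: p vp am {amP} => [[i t]|] _ am.
    by apply: (D_some _ _ h0 am am); lra.
  apply: (@D_none R d l P x0 a s E (fun _ => amin P x0 a None) h0) => //.
  have := natz_le R (hs _ (amin_in a None h0)); lra.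
- case: p vp ya za hk => [[i t]|] _ ya za hk.
    apply: (D_some _ _ h0 ya za); subst k.
    by move: yz; rewrite -(ler_nat R) -addn1 natrD => H; lra.
  apply: (@D_none R d l P x0 a s E (fun m => if m == k then y else z) h0).
    by move=> m; case: (m == k).
  have zP : z \in P by move: za; rewrite inE => /andP[].
  have := natz_le R (hs _ zP).
  have : ((\sum_m ((if m == k then y else z) m : nat)) + 1 <= \sum_m (z m : nat))%N.
    rewrite (bigD1 k) //= eqxx (bigD1 k (P := xpredT)) //=.
    rewrite (eq_bigr (fun m => (z m : nat))); last by move=> m /negbTE ->.
    by rewrite addnAC leq_add2r addn1.
  rewrite -(ler_nat R) natrD => H; lra.
- case: p vp hall => [[i t]|] _ hall.
    have [y ya y0] := hall i (inord 0).
    have [z za z2] := hall i (inord 2).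
    apply: (D_some _ _ h0 ya za).
    by rewrite y0 z2 !inordK //; lra.
  have ex : forall m, exists y, (y \in act P x0 a None) && (y m == ord0).
    by move=> m; have [y ya ym] := hall m ord0; exists y; rewrite ya ym eqxx.
  apply: (@D_none R d l P x0 a s E (fun m => xchoose (ex m)) h0).
    by move=> m; case/andP: (xchooseP (ex m)).
  rewrite big1; last by move=> m _; case/andP: (xchooseP (ex m)) => _ /eqP ->.
  have : (2%:~R : R) <= s%:~R by rewrite ler_int.
  rewrite addr0; lra.
Qed.


Unset Implicit Arguments.

Theorem mainTheorem18 (R : realType) (d : nat) (P : {set pt 2 d}) (l : R) (s : int)
  (hd : (1 <= d)%N) (hP : permutation_array P) (hl : 0 < l)
  (hs : forall x, x \in P -> ((\sum_(i < d) (x i : nat))%:Z <= s)%R)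
  (v1 v2 : spt R d) (hv1 : valid_pt l v1) (hv2 : valid_pt l v2) :
  exists f : spt R d -> R,
    in_Sigma l P f /\ div_plus_ge l f (sv s) (div2 v1 v2).
Proof.
case: hP => tr rk _.
have si := surj rk.
pose k0 : 'I_d := Ordinal hd.
have [e eP ek] := si k0 (inord 2).
have s2 : (2 <= s)%R.
  apply: le_trans (hs e eP).
  by rewrite (bigD1 k0) //= ek inordK // lez_nat leq_addr.
have insig : forall c, in_Sigma l P (fmin P e (acoef v1 v2 c)).
  move=> c; exists (acoef v1 v2 c) => p _; split.
    by move=> x xP; exact: fmin_le.
  by exists (amin P e (acoef v1 v2 c) p); [exact: amin_in|].
case: (boolP (v1 == v2)) => [/eqP Ev|nv].
  subst v2.
  exists (fmin P e (acoef v1 v1 0)); split; first exact: insig. move=> p vp.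
  exists (sl P e (acoef v1 v1 0) p); split.
    by move=> eta tp; exact: (slope_ok _ eP vp tp).
  apply: D_gen => //.
  rewrite /div2; case: (boolP (p == v1)) => [/eqP ->|_]; last by left; rewrite mulr0n addr0.
  right; right; split; first by rewrite mulr1n; lra.
  split => // k b; have [x xP xk] := si k b; exists x => //.
  by apply: act_v1 => //; rewrite subrr.
pose k1 : 'I_d := match v1 with Some (i, _) => i | None =>
   match v2 with Some (j, _) => j | None => k0 end end.
pose k2 : 'I_d := match v2 with Some (j, _) => j | None =>
   match v1 with Some (i, _) => i | None => k0 end end.
have hk1 : if v1 is Some (i, _) then k1 = i else True by rewrite /k1; case: (v1) => [[]|].
have hk2 : if v2 is Some (i, _) then k2 = i else True by rewrite /k2; case: (v2) => [[]|].
have [F2a F2b] := F2 tr rk k1 k2.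
have [c [[x [y [xP yP xy hx hy]]] [z [w [zP wP zw hz hw]]]]] :=
  @comb2 R d P k1 k2 (fun x => fx x v1 - fx x v2) (si k1) (si k2) (@F1 d P tr rk k1 k2) F2a F2b.
exists (fmin P e (acoef v1 v2 c)); split; first exact: insig. move=> p vp.
exists (sl P e (acoef v1 v2 c) p); split.
  by move=> eta tp; exact: (slope_ok _ eP vp tp).
apply: D_gen => //.
rewrite /div2; case: (boolP (p == v1)) => [/eqP ->|n1].
  rewrite (negbTE nv) mulr0n addr0.
  right; left; split; first by rewrite mulr1n.
  exists k1, x, y; split; [exact: act_v1 eP xP hx|exact: act_v1 eP yP hy|done|by rewrite /k1; case: (v1) => [[]|]].
case: (boolP (p == v2)) => [/eqP ->|n2].
  rewrite mulr0n add0r.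
  right; left; split; first by rewrite mulr1n.
  exists k2, z, w; split; [exact: act_v2 eP zP hz|exact: act_v2 eP wP hw|done|by rewrite /k2; case: (v2) => [[]|]].
by left; rewrite !mulr0n addr0.
Qed.
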